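(* Let $N\ge 2$ be an integer, let $m_N=\min\{m\ge1: d(m)=N\}$, and write $m_N=p_1^{\alpha_1}\cdots p_r^{\alpha_r}$ with all $\alpha_i\ge1$. Then for every integer $k\ge 1$ and every $j\in\{1,\dots,r\}$: if $p_j>p_{r+1}^{1/2^k}$, then $\Omega(\alpha_j+1)\le k$.
   Context: $d(m)$ is the number of positive divisors of $m$. $p_j$ denotes the $j$-th smallest prime. $\Omega(n)$ denotes the number of prime factors of $n$ counted with multiplicity (the number of prime power divisors). The primes dividing $m_N$ are exactly $p_1,\dots,p_r$ (the exponents of $m_N$ are nonincreasing in the prime). *)

(* Defs.v *)
From mathcomp Require Import all_boot.
Set Implicit Arguments. Unset Strict Implicit. Unset Printing Implicit Defensive.

Definition ndiv (m : nat) : nat := size (divisors m).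

Definition bigOmega (n : nat) : nat := \sum_(p <- primes n) logn p n.

(* p is the j-th smallest prime (j >= 1): p is prime and exactly j-1 primes are < p *)
Definition is_nth_prime (j p : nat) : bool :=
  prime p && (count prime (iota 0 p) == j.-1).

Definition is_mN (N m : nat) : Prop :=
  0 < m /\ ndiv m = N /\ (forall m', 0 < m' -> ndiv m' = N -> m <= m').

(* Main.v *)
Require Import Defs.
From mathcomp Require Import all_boot.
From mathcomp Require Import zify.

Lemma ndiv_mulp p e a : prime p -> coprime p a -> 0 < a ->
  ndiv (p ^ e * a) = e.+1 * ndiv a.
Proof.
move=> pp cpa a0.
have p0 : 0 < p by apply: prime_gt0.
have pe0 : 0 < p ^ e * a by rewrite muln_gt0 expn_gt0 p0.
rewrite /ndiv -(size_iota 0 e.+1) -(size_allpairs (fun i d => p ^ i * d)).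
apply/perm_size/uniq_perm; first exact: divisors_uniq.
  apply: allpairs_uniq; [exact: iota_uniq | exact: divisors_uniq |].
  move=> [i d] [i2 d2] H1 H2; case/allpairsP: H1 => [[x y] [_ /= Hy [-> ->]]]; case/allpairsP: H2 => [[x2 y2] [_ /= Hy2 [-> ->]]] /= E.
  move: Hy Hy2; rewrite -!dvdn_divisors // => Hy Hy2.
  have y0 : 0 < y by apply: dvdn_gt0 Hy.
  have y20 : 0 < y2 by apply: dvdn_gt0 Hy2.
  have cy : coprime p y by apply: coprime_dvdr Hy cpa.
  have cy2 : coprime p y2 by apply: coprime_dvdr Hy2 cpa.
  have Ex : x = x2.
    have := congr1 (logn p) E.
    rewrite !lognM ?expn_gt0 ?p0 // !pfactorK // (logn_coprime cy) (logn_coprime cy2) !addn0 => //.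
  subst x2; congr (_, _).
  by apply/eqP; rewrite -(eqn_pmul2l (_ : 0 < p ^ x)) ?expn_gt0 ?p0 // E.
move=> z; rewrite -dvdn_divisors //; apply/idP/allpairsP.
  move=> zd.
  have z0 : 0 < z by apply: dvdn_gt0 zd.
  have [y cy Ez] := pfactor_coprime pp z0.
  exists (logn p z, y); split.
  - rewrite mem_iota add0n ltnS.
    have := dvdn_leq_log p pe0 zd.
    by rewrite lognM ?expn_gt0 ?p0 // pfactorK // (logn_coprime cpa) addn0.
  - rewrite -dvdn_divisors //.
    have : y %| p ^ e * a by apply: dvdn_trans zd; rewrite Ez dvdn_mulr.
    by rewrite Gauss_dvdr // coprime_sym coprimeXl.
  - by rewrite /= {1}Ez mulnC.
move=> [[x y] [Hx Hy ->]].
move: Hx; rewrite mem_iota add0n ltnS => Hx.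
rewrite -dvdn_divisors // in Hy.
by rewrite dvdn_mul // dvdn_exp2l.
Qed.

Lemma BO_prime v : prime v -> bigOmega v = 1.
Proof. by move=> pv; rewrite /bigOmega primes_prime // big_seq1 logn_prime // eqxx. Qed.

Lemma BO_B n B : 0 < n -> n < B -> bigOmega n = \sum_(p <- iota 0 B) logn p n.
Proof.
move=> n0 nB.
rewrite (bigID (fun p => p \in primes n)) /=.
rewrite [X in _ = _ + X]big1 ?addn0; last first.
  by move=> i Hi; apply/eqP; rewrite -leqn0 leqNgt logn_gt0.
rewrite -big_filter /bigOmega; apply: perm_big.
apply: uniq_perm; [exact: primes_uniq | by rewrite filter_uniq // iota_uniq |].
move=> p; rewrite mem_filter mem_iota add0n /=.
case: (boolP (p \in primes n)) => //= H; rewrite mem_primes in H.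
case/and3P: H => _ _ /(dvdn_leq n0) pn; by rewrite (leq_ltn_trans pn nB). 
Qed.

Lemma BO_mul a b : 0 < a -> 0 < b -> bigOmega (a * b) = bigOmega a + bigOmega b.
Proof.
move=> a0 b0.
have ab0 : 0 < a * b by rewrite muln_gt0 a0.
have ha : a < (a * b).+1 by rewrite ltnS leq_pmulr.
have hb : b < (a * b).+1 by rewrite ltnS leq_pmull.
rewrite !(@BO_B _ (a * b).+1) // -big_split /=.
by apply: eq_bigr => p _; rewrite lognM.
Qed.

Lemma BO_le n : 0 < n -> 2 ^ bigOmega n <= n.
Proof.
elim: n {-2}n (leqnn n) => [|N IH] n nN n0; first by case: n nN n0.
have [n1|n1] := leqP n 1.
  have -> : n = 1 by apply/eqP; rewrite eqn_leq n1.
  by rewrite /bigOmega big_nil.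
set v := pdiv n.
have pv : prime v by apply: pdiv_prime.
have En : n = v * (n %/ v) by rewrite mulnC divnK // pdiv_dvd.
have u0 : 0 < n %/ v by rewrite divn_gt0 ?prime_gt0 // dvdn_leq // pdiv_dvd.
rewrite En BO_mul ?u0 ?(prime_gt0 pv) // BO_prime // expnD expn1 leq_mul //; first exact: prime_gt1.
apply: IH => //.
rewrite -ltnS; apply: leq_trans nN.
rewrite {2}En -[X in X < _]mul1n ltn_pmul2r //; exact: prime_gt1.
Qed.

Theorem lemma2p2 (N m : nat) :
  2 <= N -> is_mN N m ->
  forall (k j : nat), 1 <= k -> 1 <= j <= size (primes m) ->
  forall (pj q : nat), is_nth_prime j pj -> is_nth_prime (size (primes m)).+1 q ->
  q < pj ^ (2 ^ k) ->
  bigOmega (logn pj m).+1 <= k.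
Proof.
move=> N2 [m0 [ndm minm]] k j k1 /andP[j1 jr] pj q /andP[ppj _] /andP[pq cq] qlt.
have qm : ~~ (q %| m).
  apply/negP => qdm.
  have qin : q \in primes m by rewrite mem_primes pq m0.
  case: (boolP (has (fun p => prime p && (p \notin primes m)) (iota 0 q))) => [/hasP [p pin /andP[pp pn]] | /hasPn H].
    move: pin; rewrite mem_iota add0n => /andP[_ plq].
    have [m1 cq1 Em] := pfactor_coprime pq m0.
    have m10 : 0 < m1 by move: m0; rewrite Em muln_gt0 => /andP[].
    set e := logn q m in Em.
    have e0 : 0 < e by rewrite /e logn_gt0.
    have pm1 : coprime p m1.
      rewrite prime_coprime //; apply/negP => pd; move: pn; rewrite mem_primes pp m0 /=.
      by rewrite Em (dvdn_mulr _ pd).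
    have := minm (p ^ e * m1).
    rewrite muln_gt0 expn_gt0 prime_gt0 // m10 => /(_ isT).
    have E1 : ndiv (p ^ e * m1) = N.
      by rewrite (ndiv_mulp p e m1 pp pm1 m10) -ndm {1}Em (mulnC m1) (ndiv_mulp q e m1 pq cq1 m10).
    move=> /(_ E1); rewrite {1}Em mulnC leq_pmul2r // leqNgt ltn_exp2r //.
    by rewrite plq.
  have : size (q :: filter prime (iota 0 q)) <= size (primes m).
    apply: uniq_leq_size.
      by rewrite cons_uniq mem_filter mem_iota add0n ltnn andbF /= filter_uniq ?iota_uniq // andbF.
    move=> x; rewrite inE => /orP[/eqP -> // | ]; rewrite mem_filter => /andP[px xin].
    by have := H x xin; rewrite px /= negbK.
  by rewrite /= size_filter (eqP cq) /= ltnn.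
set al := logn pj m.
case: (posnP al) => [-> | al0]; first by rewrite /bigOmega big_nil.
rewrite leqNgt; apply/negP => Hk.
set n := al.+1.
have n1 : 1 < n by rewrite ltnS.
set v := pdiv n.
have pv : prime v by apply: pdiv_prime.
set u := n %/ v.
have En : n = u * v by rewrite divnK // pdiv_dvd.
have u0 : 0 < u by rewrite divn_gt0 ?prime_gt0 // dvdn_leq // pdiv_dvd.
have ku : 2 ^ k <= u.
  apply: leq_trans _ (@BO_le u u0); rewrite leq_exp2l //.
  by move: Hk; rewrite -/n En BO_mul ?u0 ?(prime_gt0 pv) // (@BO_prime v pv) addn1 ltnS //=.
have [m1 cj Em] := pfactor_coprime ppj m0.
have m10 : 0 < m1 by move: m0; rewrite Em muln_gt0 => /andP[].
have pjm : pj %| m by have := al0; rewrite /al logn_gt0 mem_primes => /and3P[].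
have qm1 : coprime q m1.
  rewrite prime_coprime //; apply/negP => qd; move/negP: qm; apply.
  by rewrite Em dvdn_mulr.
have pjq : coprime pj q.
  rewrite prime_coprime // dvdn_prime2 //; apply/negP => /eqP E; subst q.
  by rewrite pjm in qm.
have v1 : 1 < v by apply: prime_gt1.
set w := v.-1.
have Ev : v = w.+1 by rewrite /w prednK // ltnW.
have w0 : 0 < w by rewrite -ltnS -Ev.
set u' := u.-1.
have Eu : u = u'.+1 by rewrite /u' prednK.
have Eal : al = u' + u * w.
  have : al.+1 = u * v by [].
  rewrite Ev mulnS {1}Eu; lia.
have cjq : coprime pj (q ^ w * m1) by rewrite coprimeMr coprimeXr // cj.
have qw0 : 0 < q ^ w * m1 by rewrite muln_gt0 expn_gt0 prime_gt0.
have E1 : ndiv (pj ^ u' * (q ^ w * m1)) = N.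
  rewrite (ndiv_mulp pj u' _ ppj cjq qw0) (ndiv_mulp q w m1 pq qm1 m10).
  rewrite -ndm {1}Em -/al (mulnC m1) (ndiv_mulp pj al m1 ppj cj m10) -/n En.
  by rewrite -Eu Ev mulnA.
have : 0 < pj ^ u' * (q ^ w * m1) by rewrite muln_gt0 expn_gt0 prime_gt0.
move/minm/(_ E1).
rewrite {1}Em -/al (mulnC m1) Eal expnD -mulnA leq_pmul2l ?expn_gt0 ?prime_gt0 //.
rewrite leq_pmul2r // expnM leqNgt ltn_exp2r //.
by rewrite (leq_trans qlt) // leq_pexp2l ?prime_gt0.
Qed.
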